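(* Let $u,v\in A_N$ be commuting even permutations, viewed as permutation matrices acting on $\mathbb C^N$, and let $T=\langle u,v\rangle$. Then: (1) $T$ satisfies the parity condition (PC) if and only if $u^*(\xi_v)=\xi_v$ and $v^*(\xi_u)=\xi_u$; (2) if $T$ does not satisfy (PC), then $u^*(\xi_v)=-\xi_v$ or $v^*(\xi_u)=-\xi_u$.
   Context: Parity condition (PC) for a group $T$ of permutations of coordinates of $\mathbb C^N$: for every subgroup $T'\subseteq T$, $\dim(\mathbb C^N)^{T'}\equiv N\pmod 2$. For a linear map $w$ let $\mathrm{Fix}(w)$ be its eigenvalue-1 subspace and $M_w$ the sum of its other eigenspaces; $\xi_w$ is a formal generator, and for $v$ commuting with $w$ the action is $v^*(\xi_w)=\det(v|_{M_w})^{-1}\xi_w$. *)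

(* Defs.v *)
From HB Require Import structures.
From mathcomp Require Import all_boot all_order all_algebra all_fingroup all_solvable alt all_field.
Set Implicit Arguments. Unset Strict Implicit. Unset Printing Implicit Defensive.
Import GRing.Theory Num.Theory.
Local Open Scope ring_scope.

(* Permutation matrix of s acting on C^N (C = algC, the algebraic complex
   numbers; row-vector convention x |-> x *m perm_mx s). *)
Definition pmx (N : nat) (s : 'S_N) : 'M[algC]_N := perm_mx s.

Definition fixspace (N : nat) (H : {set 'S_N}) : 'M[algC]_N :=
  (\bigcap_(g in H) kermx (pmx g - 1%:M))%MS.

Definition PC (N : nat) (T : {set 'S_N}) : Prop :=
  forall H : {group 'S_N}, H \subset T ->
    odd (\rank (fixspace H)) = odd N.

Definition eig_list (N : nat) (A : 'M[algC]_N) : seq algC :=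
  sval (closed_field_poly_normal (char_poly A)).

Definition Fixsp (N : nat) (w : 'S_N) : 'M[algC]_N := eigenspace (pmx w) 1.
Definition Msp (N : nat) (w : 'S_N) : 'M[algC]_N :=
  (\sum_(a <- undup (eig_list (pmx w)) | a != 1) eigenspace (pmx w) a)%MS.

(* Determinant of the linear map V restricted to the (V-invariant) subspace M,
   computed in the basis row_base M. *)
Definition restr_det (N : nat) (V M : 'M[algC]_N) : algC :=
  \det (row_base M *m V *m pinvmx (row_base M)).

(* v^*(xi_w) = xi_action v w * xi_w, where
   xi_action v w = det(v|_{M_w})^{-1}. *)
Definition xi_action (N : nat) (v w : 'S_N) : algC :=
  (restr_det (pmx v) (Msp w))^-1.

(* Main.v *)
Require Import Defs.
From HB Require Import structures.
From mathcomp Require Import all_boot all_order all_algebra all_fingroup all_solvable alt all_field.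
Set Implicit Arguments. Unset Strict Implicit. Unset Printing Implicit Defensive.
Import GRing.Theory Num.Theory.
Local Open Scope ring_scope.

Section Orb.
Variable n : nat.
Implicit Types a s : 'S_n.
Local Notation ov a i := (enum_val (A := porbits a) i).

Definition Ind a : 'M[algC]_(#|porbits a|, n) :=
  \matrix_(i < #|porbits a|, j < n) ((j \in ov a i)%:R).
Definition Rinv a : 'M[algC]_(n, #|porbits a|) :=
  \matrix_(j < n, i < #|porbits a|) ((Some j == [pick x in ov a i])%:R).

Lemma porbits_mem a o : o \in porbits a -> exists x, o = porbit a x.
Proof. by case/imsetP => x _ ->; exists x. Qed.

Lemma orbit_uniq a o o' x : o \in porbits a -> o' \in porbits a ->
  x \in o -> x \in o' -> o = o'.
Proof.
move=> /porbits_mem [y ->] /porbits_mem [z ->] hy hz.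
by rewrite -(eqP (etrans (eq_porbit_mem _ _ _) hy)) -(eqP (etrans (eq_porbit_mem _ _ _) hz)).
Qed.

Lemma pick_orb a (i : 'I_#|porbits a|) :
  exists2 p, [pick x in ov a i] = Some p & p \in ov a i.
Proof.
case: pickP => [p Hp|H]; first by exists p.
have [y hy] := porbits_mem (enum_valP i).
by move: (H y); rewrite hy porbit_id.
Qed.

Lemma Ind_Rinv a : Ind a *m Rinv a = 1%:M.
Proof.
apply/matrixP => i i'; rewrite !mxE.
have [p Hp Hpi] := pick_orb i'.
rewrite (bigD1 p) //= big1 => [|j /negbTE hj]; last first.
  by rewrite !mxE Hp (inj_eq Some_inj) hj mulr0.
rewrite !mxE Hp eqxx mulr1 addr0.
case: (eqVneq i i') => [->|ne]; first by rewrite Hpi.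
case: (boolP (p \in enum_val i)) => // hpi.
by case/negP: ne; apply/eqP/enum_val_inj/(orbit_uniq (enum_valP _) (enum_valP _) hpi Hpi).
Qed.

Lemma Ind_free a : row_free (Ind a).
Proof. by apply/row_freeP; exists (Rinv a); exact: Ind_Rinv. Qed.

Lemma porbit_closed a x y : (a y \in porbit a x) = (y \in porbit a x).
Proof.
by rewrite porbit_sym -[a y]/((a ^+ 1)%g y) porbit_perm porbit_sym.
Qed.

Lemma Ind_perm a : Ind a *m perm_mx a = Ind a.
Proof.
apply/matrixP => i j.
have -> : perm_mx a = perm_mx (a^-1)^-1 by rewrite invgK.
rewrite -col_permE !mxE.
have [y ->] := porbits_mem (enum_valP i).
by rewrite -{2}(permKV a j) porbit_closed.
Qed.

Lemma Ind_sub_ker a : (Ind a <= kermx (perm_mx a - 1%:M))%MS.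
Proof. by apply/sub_kermxP; rewrite mulmxBr mulmx1 Ind_perm subrr. Qed.

Lemma ker_sub_Ind a : (kermx (perm_mx a - 1%:M) <= Ind a)%MS.
Proof.
apply/row_subP => k; set x := row k _.
have : (x <= kermx (perm_mx a - 1%:M))%MS by apply: row_sub.
move/sub_kermxP; rewrite mulmxBr mulmx1 => /eqP; rewrite subr_eq0 => /eqP hx.
have inv y : x 0 (a y) = x 0 y.
  rewrite -{1}hx.
  have -> : perm_mx a = perm_mx (a^-1)^-1 by rewrite invgK.
  by rewrite -col_permE !mxE permK.
have invk m y : x 0 ((a ^+ m)%g y) = x 0 y.
  by elim: m => [|m IH]; rewrite ?expg0 ?perm1 // expgSr permM inv.
have const y z : z \in porbit a y -> x 0 z = x 0 y.
  by case/porbitP => m ->; rewrite invk.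
suff -> : x = (x *m Rinv a) *m Ind a by apply: submxMl.
apply/matrixP => i0 j; rewrite (ord1 i0) [RHS]mxE.
have hj : porbit a j \in porbits a by apply: imset_f.
pose i1 := enum_rank_in hj (porbit a j).
have e1 : enum_val i1 = porbit a j by rewrite enum_rankK_in.
rewrite (bigD1 i1) //= big1 => [|i ne]; last first.
  rewrite !mxE; case: (boolP (j \in enum_val i)) => hji; last by rewrite mulr0.
  case/negP: ne; apply/eqP/enum_val_inj; rewrite e1.
  by apply: (orbit_uniq (enum_valP _) hj hji (porbit_id _ _)).
rewrite [X in _ * X]mxE e1 porbit_id mulr1 addr0 [(x *m _) 0 _]mxE.
have [p Hp Hpi] := pick_orb i1.
rewrite (bigD1 p) //= big1 => [|q /negbTE hq]; last by rewrite !mxE Hp (inj_eq Some_inj) hq mulr0.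
rewrite [Rinv _ _ _]mxE Hp eqxx mulr1 addr0.
by apply/esym/const; rewrite -e1.
Qed.

Lemma Ind_ker a : (Ind a :=: kermx (perm_mx a - 1%:M))%MS.
Proof. by apply/eqmxP; rewrite Ind_sub_ker ker_sub_Ind. Qed.

Lemma rank_Ind a : \rank (Ind a) = #|porbits a|.
Proof. exact/eqP/Ind_free. Qed.


Lemma pre_porbit a s x : commute a s ->
  [set y | s^-1%g y \in porbit a x] = porbit a (s x).
Proof.
move=> c; apply/setP => y; rewrite inE.
have cm m : commute (a ^+ m)%g s by apply/commute_sym/commuteX/commute_sym.
apply/porbitP/porbitP => [[m hm]|[m hm]]; exists m.
  by rewrite -(permKV s y) hm -permM (cm m) permM.
by rewrite hm -(permM s (a ^+ m)%g x) -(cm m) permM permK.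
Qed.

Lemma pre_orb a s o : commute a s -> o \in porbits a ->
  [set y | s^-1%g y \in o] \in porbits a.
Proof.
move=> c /porbits_mem [x ->]; rewrite pre_porbit //; exact: imset_f.
Qed.

Definition indf a s (i : 'I_#|porbits a|) : 'I_#|porbits a| :=
  enum_rank_in (enum_valP i) [set y | s^-1%g y \in ov a i].

Lemma indf_val a s i : commute a s ->
  ov a (indf s i) = [set y | s^-1%g y \in ov a i].
Proof. by move=> c; rewrite /indf enum_rankK_in // pre_orb // enum_valP. Qed.

Lemma indf_inj a s : commute a s -> injective (@indf a s).
Proof.
move=> c i i' e; apply: enum_val_inj.
have := congr1 (fun k => ov a k) e; rewrite /= !indf_val // => e2.
apply/setP => y; move/setP: e2 => /(_ (s y)); rewrite !inE permK //.
Qed.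

Definition indp a s (c : commute a s) : 'S_#|porbits a| := perm (indf_inj c).

Lemma Ind_indp a s (c : commute a s) :
  Ind a *m perm_mx s = perm_mx (indp c) *m Ind a.
Proof.
apply/matrixP => i j.
have -> : perm_mx s = perm_mx (s^-1)^-1 by rewrite invgK.
by rewrite -col_permE -row_permE !mxE /indp [perm (indf_inj c) i]permE indf_val // inE.
Qed.

End Orb.
Lemma restr_det_basis N r (B : 'M[algC]_(r, N)) (A : 'M_r) (M V : 'M_N) :
  row_free B -> (B :=: M)%MS -> B *m V = A *m B -> restr_det V M = \det A.
Proof.
move=> fB eBM BV.
have hr : r = \rank M by rewrite -(eqP fB) eBM.
subst r.
set rb := row_base M.
have sV : (M *m V <= M)%MS.
  by rewrite -(eqmxMr V eBM) -eBM BV submxMl.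
have rbV : rb *m V = conjmx rb V *m rb.
  by rewrite /conjmx mulmxKpV // stablemx_row_base.
set C := B *m pinvmx rb.
have BC : B = C *m rb by rewrite mulmxKpV // eq_row_base eBM.
have e : C *m conjmx rb V = A *m C.
  apply: (row_free_inj (row_base_free M)).
  by rewrite -/rb -mulmxA -rbV mulmxA -BC BV BC mulmxA.
have Cu : C \in unitmx.
  rewrite -row_free_unit /row_free eqn_leq rank_leq_row /=.
  by rewrite -{1}(eqP fB) BC mxrankM_maxl.
have dC : \det C != 0 by rewrite -unitfE -unitmxE.
move/(congr1 determinant): e; rewrite !det_mulmx mulrC => /(mulIf dC).
by rewrite /restr_det.
Qed.

Lemma restr_det_full N (V : 'M[algC]_N) : restr_det V 1%:M = \det V.
Proof.
apply: (restr_det_basis (B := 1%:M)); rewrite ?row_free_unit ?unitmx1 //.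
by rewrite mul1mx mulmx1.
Qed.

Lemma restr_detM N (V V' M : 'M[algC]_N) :
  (M *m V <= M)%MS -> (M *m V' <= M)%MS ->
  restr_det (V *m V') M = restr_det V M * restr_det V' M.
Proof.
move=> sV sV'; rewrite /restr_det.
have := @conjmxM _ _ _ (row_base M) V V'; rewrite /conjmx => ->.
- by rewrite det_mulmx.
- by rewrite inE stablemx_row_base.
- by rewrite inE stablemx_row_base.
Qed.

Lemma restr_det1 N (M : 'M[algC]_N) : restr_det 1%:M M = 1.
Proof.
rewrite /restr_det.
have := @conjmx_scalar _ _ _ (row_base M) 1; rewrite /conjmx => ->.
  by rewrite det1.
exact: row_base_free.
Qed.

Lemma restr_det_dec N (V W M : 'M[algC]_N) :
  (W *m V <= W)%MS -> (M *m V <= M)%MS -> (W + M :=: 1%:M)%MS ->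
  (\rank W + \rank M = N)%N -> \det V = restr_det V W * restr_det V M.
Proof.
move=> sW sM hfull hrank.
pose B := col_mx (row_base W) (row_base M).
pose A := block_mx (conjmx (row_base W) V) 0 0 (conjmx (row_base M) V).
have eB : (B :=: 1%:M)%MS.
  apply: eqmx_trans (eqmx_sym (addsmxE _ _)) _.
  exact: eqmx_trans (adds_eqmx (eq_row_base W) (eq_row_base M)) hfull.
rewrite -restr_det_full (restr_det_basis (B := B) (A := A)) //.
- by rewrite det_ublock.
- by rewrite /row_free eB mxrank1 hrank.
rewrite mul_col_mx mul_block_col !mul0mx addr0 add0r.
by rewrite /conjmx !mulmxKpV // stablemx_row_base.
Qed.

Section Fix.
Variable N : nat.
Implicit Types a s g : 'S_N.

Lemma fixspace1 a : fixspace [set a] = kermx (pmx a - 1%:M).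
Proof. by rewrite /fixspace big_set1. Qed.

Lemma sub_fixspaceP (S : {set 'S_N}) m (x : 'M[algC]_(m, N)) :
  reflect (forall g, g \in S -> x *m pmx g = x) (x <= fixspace S)%MS.
Proof.
apply: (iffP sub_bigcapmxP) => H g gS.
  by have /sub_kermxP := H g gS; rewrite mulmxBr mulmx1 => /eqP; rewrite subr_eq0 => /eqP.
by apply/sub_kermxP; rewrite mulmxBr mulmx1 H // subrr.
Qed.

Lemma fixspace_fix (S : {set 'S_N}) g : g \in S -> fixspace S *m pmx g = fixspace S.
Proof. by move: (submx_refl (fixspace S)) => /sub_fixspaceP; apply. Qed.

Lemma fixspace_gen (S : {set 'S_N}) : (fixspace <<S>>%g :=: fixspace S)%MS.
Proof.
apply/eqmxP/andP; split.
  by apply/sub_fixspaceP => g gS; exact/fixspace_fix/mem_gen.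
set F := fixspace S.
have gG : group_set [set g | F *m pmx g == F].
  apply/group_setP; split; first by rewrite inE /pmx perm_mx1 mulmx1.
  move=> x y; rewrite !inE /pmx perm_mxM mulmxA => /eqP -> /eqP ->; done.
have : (<<S>> \subset Group gG)%g.
  rewrite gen_subG; apply/subsetP => g gS; rewrite inE.
  by apply/eqP/fixspace_fix.
move/subsetP => H; apply/sub_fixspaceP => g /H; rewrite inE => /eqP //.
Qed.

Lemma rank_fixspace1 a : \rank (fixspace [set a]) = #|porbits a|.
Proof. by rewrite fixspace1 /pmx -(Ind_ker a) rank_Ind. Qed.

Lemma odd_rank a : a \in ('Alt_('I_N))%g ->
  odd (\rank (fixspace [set a])) = odd N.
Proof.
rewrite Alt_even /odd_perm card_ord rank_fixspace1.
by case: (odd N); case: (odd #|porbits a|).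
Qed.

Lemma eps_formula a s (c : commute a s) :
  restr_det (pmx s) (fixspace [set a]) =
  (-1) ^+ (odd (\rank (fixspace [set a])) (+) odd (\rank (fixspace [set a; s]))).
Proof.
rewrite (restr_det_basis (B := Ind a) (A := perm_mx (indp c))).
- rewrite det_perm /odd_perm card_ord rank_fixspace1.
  congr (_ ^+ (_ (+) odd _)).
  pose P : 'M[algC]_#|porbits a| := perm_mx (indp c).
  pose K := kermx (P - 1%:M).
  have KP : K *m P = K.
    by apply/eqP; rewrite -subr_eq0 -{2}(mulmx1 K) -mulmxBr mulmx_ker.
  rewrite -rank_Ind (Ind_ker (indp c)) -/P -/K -(mxrankMfree K (Ind_free a)).
  apply/eqmx_rank/andP; split.
    apply/sub_fixspaceP => g /set2P [->|->].
      by rewrite -mulmxA Ind_perm.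
    by rewrite -mulmxA /pmx Ind_indp mulmxA KP.
  set F := fixspace _.
  have FI : (F <= Ind a)%MS.
    rewrite (Ind_ker a); apply/sub_kermxP; rewrite mulmxBr mulmx1.
    by rewrite fixspace_fix ?subrr // !inE eqxx.
  have FP : F *m pmx s = F.
    by apply: fixspace_fix; rewrite !inE eqxx orbT.
  set Y := F *m pinvmx (Ind a).
  have FY : F = Y *m Ind a by rewrite mulmxKpV.
  rewrite FY submxMr //; apply/sub_kermxP; rewrite mulmxBr mulmx1.
  apply/eqP; rewrite subr_eq0; apply/eqP/(row_free_inj (Ind_free a)) => /=.
  by rewrite -mulmxA -Ind_indp mulmxA -FY FP.
- exact: Ind_free.
- by rewrite fixspace1; exact: Ind_ker.
- exact: Ind_indp.
Qed.

End Fix.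

Section Dec.

Lemma eig_list_mem N (A : 'M[algC]_N) a : eigenvalue A a -> a \in eig_list A.
Proof.
rewrite eigenvalue_root_char /eig_list; case: (closed_field_poly_normal _) => r hr /=.
by rewrite {1}hr (monicP (char_poly_monic A)) scale1r root_prod_XsubC.
Qed.

Lemma sum_sup N (E : algC -> 'M[algC]_N) (P : pred algC) s x :
  x \in s -> P x -> (E x <= \sum_(i <- s | P i) E i)%MS.
Proof.
elim: s => //= y s IH; rewrite inE big_cons; case/orP => [/eqP <- -> |xs Px].
  exact: addsmxSl.
case: (P y); last exact: IH.
exact: submx_trans (IH xs Px) (addsmxSr _ _).
Qed.

Lemma pmx_exp N (v : 'S_N.+1) m : pmx (v ^+ m)%g = pmx v ^+ m.
Proof.
elim: m => [|m IH]; first by rewrite expg0 expr0 /pmx perm_mx1.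
by rewrite expgS exprS -IH /pmx perm_mxM mulmxE.
Qed.

Lemma pmx_diag N (v : 'S_N.+1) : diagonalizable (pmx v).
Proof.
apply/diagonalizableP.
set m := #[v]%g.
have [z pz] := C_prim_root_exists (order_gt0 v).
exists [seq z ^+ i | i <- iota 0 m].
  rewrite map_inj_in_uniq ?iota_uniq // => i j; rewrite !mem_iota /= !add0n => hi hj.
  by move/eqP; rewrite (eq_prim_root_expr pz) !modn_small // => /eqP.
rewrite big_map.
have -> : iota 0 m = index_iota 0 m by rewrite /index_iota subn0.
rewrite (factor_Xn_sub_1 pz); apply: mxminpoly_min.
by rewrite rmorphB rmorphXn rmorph1 /= horner_mx_X -pmx_exp expg_order /pmx perm_mx1 subrr.
Qed.

Lemma Msp_full N (v : 'S_N) : (Fixsp v + Msp v :=: 1%:M)%MS.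
Proof.
apply/eqmxP; rewrite submx1 /=.
case: N v => [|n] v; first by rewrite thinmx0 sub0mx.
have [rs _ hrs] := (@diagonalizablePeigen _ _ (pmx v)).1 (pmx_diag v).
rewrite -hrs; apply: (big_ind (fun X => X <= Fixsp v + Msp v)%MS).
- exact: sub0mx.
- by move=> X Y hX hY; rewrite addsmx_sub hX hY.
move=> r _; case: (eqVneq r 1) => [->|r1]; first exact: addsmxSl.
case: (boolP (eigenvalue (pmx v) r)) => [ev|]; last first.
  by rewrite negbK => /eqP ->; rewrite sub0mx.
apply: submx_trans (addsmxSr _ _).
by apply: sum_sup => //; rewrite mem_undup eig_list_mem.
Qed.

Lemma Msp_rank N (v : 'S_N) : (\rank (Fixsp v) + \rank (Msp v) = N)%N.
Proof.
set Q := pmx v.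
set es' := [seq a <- undup (eig_list Q) | a != 1].
set l := 1 :: es'.
have ul : uniq l.
  by rewrite /= mem_filter eqxx /= filter_uniq // undup_uniq.
have dx : mxdirect (\sum_(i < size l) eigenspace Q l`_i).
  apply: mxdirect_sum_eigenspace => i j _ _ e; apply/val_inj/eqP.
  by rewrite -(nth_uniq 0 (ltn_ord i) (ltn_ord j) ul) e.
have hd := mxdirectP dx; rewrite /= in hd.
rewrite big_ord_recl [in X in _ = X]big_ord_recl /= in hd.
have eM : Msp v = (\sum_(i < size es') eigenspace Q es'`_i)%MS.
  by rewrite /Msp -big_filter (big_nth 0) big_mkord.
have hfull : \rank (Fixsp v + Msp v) = N by rewrite Msp_full mxrank1.
apply/eqP; rewrite eqn_leq; apply/andP; split; last first.
  by rewrite -[X in (X <= _)%N]hfull mxrank_adds_leqif.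
rewrite -[X in (_ <= X)%N]hfull eM /Fixsp -/Q hd leq_add2l.
exact: mxrank_sum_leqif.
Qed.

End Dec.

Section Main.
Variable N : nat.
Implicit Types a b u v : 'S_N.

Lemma pmx_comm a b : commute a b -> pmx a *m pmx b = pmx b *m pmx a.
Proof. by move=> c; rewrite /pmx -!perm_mxM c. Qed.

Lemma stable_fix1 a b : commute a b ->
  (fixspace [set a] *m pmx b <= fixspace [set a])%MS.
Proof.
move=> c; rewrite fixspace1; apply/sub_kermxP.
have e : pmx b *m (pmx a - 1%:M) = (pmx a - 1%:M) *m pmx b.
  by rewrite mulmxBr mulmxBl mulmx1 mul1mx pmx_comm.
by rewrite -mulmxA e mulmxA mulmx_ker mul0mx.
Qed.

Lemma xi_eq u v : commute u v -> u \in ('Alt_('I_N))%g ->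
  xi_action u v = restr_det (pmx u) (fixspace [set v]).
Proof.
move=> c uA.
have hdet : \det (pmx u) = 1.
  by move: uA; rewrite Alt_even /pmx det_perm => /negbTE ->; rewrite expr0.
have eF : Fixsp v = fixspace [set v] by rewrite fixspace1.
have sW : (Fixsp v *m pmx u <= Fixsp v)%MS.
  by rewrite eF; apply: stable_fix1; apply: commute_sym.
have sM : (Msp v *m pmx u <= Msp v)%MS.
  rewrite /Msp; apply: (big_ind (fun X => X *m pmx u <= X)%MS).
  - by rewrite mul0mx sub0mx.
  - by move=> X Y hX hY; rewrite addsmxMr addsmxS.
  move=> r _; apply: comm_mx_stable_eigenspace.
  by rewrite /comm_mx pmx_comm //; apply: commute_sym.
have := restr_det_dec sW sM (Msp_full v) (Msp_rank v).
rewrite hdet -eF /xi_action => h.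
have h0 : restr_det (pmx u) (Msp v) != 0.
  by apply/eqP => e; move: h; rewrite e mulr0; apply/eqP; rewrite oner_eq0.
by rewrite -[_^-1]mul1r h mulfK.
Qed.

Lemma sgn_eq1 (k : bool) : ((-1) ^+ k = 1 :> algC) -> k = false.
Proof.
case: k => //=; rewrite expr1 => h.
have : (2%:R : algC) == 0 by rewrite -[2%N]/(1 + 1)%N natrD -{1}h addNr.
by rewrite pnatr_eq0.
Qed.

Lemma set2C a b : [set a; b] = [set b; a].
Proof. by apply/setP => x; rewrite !inE orbC. Qed.

Lemma set2id a : [set a; a] = [set a].
Proof. by apply/setP => x; rewrite !inE orbb. Qed.

End Main.

Unset Implicit Arguments.

Theorem proposition8 (N : nat) (u v : 'S_N) :
  u \in ('Alt_('I_N))%g -> v \in ('Alt_('I_N))%g -> commute u v ->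
  (PC (<<[set u; v]>>)%g <-> (xi_action u v = 1 /\ xi_action v u = 1)) /\
  (~ PC (<<[set u; v]>>)%g -> (xi_action u v = -1 \/ xi_action v u = -1)).
Proof.
move=> uA vA cuv.
set T := (<<[set u; v]>>)%g.
have uT : u \in T by apply: mem_gen; rewrite !inE eqxx.
have vT : v \in T by apply: mem_gen; rewrite !inE eqxx orbT.
pose eps (a b : 'S_N) := restr_det (pmx b) (fixspace [set a]).
have hT : (T \subset 'Alt_('I_N))%g.
  by rewrite gen_subG; apply/subsetP => x /set2P [] ->.
have abT : abelian T.
  rewrite abelian_gen; apply/centsP => x /set2P [] -> y /set2P [] -> //.
have commT a b : a \in T -> b \in T -> commute a b.
  by move=> aT bT; apply: (centsP abT).
have rT a : a \in T -> odd (\rank (fixspace [set a])) = odd N.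
  by move=> aT; apply: odd_rank; apply: (subsetP hT).
have eps_val a b : a \in T -> b \in T -> eps a b =
   (-1) ^+ (odd (\rank (fixspace [set a])) (+) odd (\rank (fixspace [set a; b]))).
  by move=> aT bT; apply: eps_formula; apply: commT.
have eps_sym a b : a \in T -> b \in T -> eps a b = eps b a.
  by move=> aT bT; rewrite !eps_val // rT // rT // set2C.
have eps_aa a : a \in T -> eps a a = 1.
  by move=> aT; rewrite eps_val // set2id addbb expr0.
have gG a : a \in T -> group_set [set b in T | eps a b == 1].
  move=> aT; apply/group_setP; split.
    by rewrite inE group1 /eps /pmx perm_mx1 restr_det1 eqxx.
  move=> x y; rewrite !inE => /andP [xT /eqP ex] /andP [yT /eqP ey].
  rewrite groupM //= /eps /pmx perm_mxM restr_detM.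
  - by rewrite -/(pmx x) -/(pmx y) -/(eps a x) -/(eps a y) ex ey mulr1.
  - by apply: stable_fix1; apply: commT.
  - by apply: stable_fix1; apply: commT.
have eps_all a : a \in T -> eps a u = 1 -> eps a v = 1 ->
    forall b, b \in T -> eps a b = 1.
  move=> aT hu hv.
  have : (T \subset Group (gG a aT))%g.
    by rewrite gen_subG; apply/subsetP => x /set2P [] -> /=; rewrite inE ?hu ?hv eqxx andbT.
  by move/subsetP => H b /H; rewrite inE => /andP [_ /eqP].
have xiu : xi_action u v = eps v u by rewrite xi_eq.
have xiv : xi_action v u = eps u v by rewrite xi_eq //; apply: commute_sym.
have part1 : PC T <-> (eps u v = 1 /\ eps v u = 1).
  split.
    move=> hPC.
    have := hPC [group of T] (subxx _).
    rewrite /= (fixspace_gen [set u; v]) => hr.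
    by rewrite eps_val // eps_val // rT // rT // [[set v; u]]set2C hr addbb expr0.
  case=> huv hvu.
  have eu b : b \in T -> eps u b = 1 by apply: eps_all; rewrite ?eps_aa.
  have ev b : b \in T -> eps v b = 1 by apply: eps_all; rewrite ?eps_aa.
  have eab a b : a \in T -> b \in T -> eps a b = 1.
    by move=> aT bT; apply: eps_all; rewrite // eps_sym ?eu ?ev.
  move=> H sHT.
  have [B gB cB] := grank_witness H.
  have sBT : B \subset T by rewrite (subset_trans _ sHT) // -gB subset_gen.
  have mH : ('m(H)%g <= 2)%N.
    rewrite grank_abelian ?(abelianS sHT abT) //.
    apply: leq_trans (rankS sHT) _.
    rewrite -grank_abelian //; apply: leq_trans (grank_min _) _.
    by rewrite cards2; case: (u != v).
  rewrite -gB (fixspace_gen B).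
  move: mH; rewrite -cB leq_eqVlt ltnS leq_eqVlt ltnS leqn0.
  case/or3P.
  - case/cards2P => a [b [_ eB]]; move: sBT; rewrite eB => /subsetP sBT.
    have aT : a \in T by apply: sBT; rewrite !inE eqxx.
    have bT : b \in T by apply: sBT; rewrite !inE eqxx orbT.
    have := eab a b aT bT; rewrite eps_val // rT // => /sgn_eq1.
    by case: (odd N); case: (odd _).
  - case/cards1P => a eB; move: sBT; rewrite eB => /subsetP sBT.
    by apply: rT; apply: sBT; rewrite !inE.
  - rewrite cards_eq0 => /eqP ->.
    by rewrite /fixspace big_set0 mxrank1.
rewrite xiu xiv; split.
  by split => [/part1 [-> ->] // | [h1 h2]]; apply/part1.
move=> nPC.
have hu := eps_val u v uT vT; have hv := eps_val v u vT uT.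
have [h1|h1] : eps v u = 1 \/ eps v u = -1.
  by rewrite hv; case: (_ (+) _); [right; rewrite expr1 | left; rewrite expr0].
  have [h2|h2] : eps u v = 1 \/ eps u v = -1.
    by rewrite hu; case: (_ (+) _); [right; rewrite expr1 | left; rewrite expr0].
    by case: nPC; apply/part1.
  by right.
by left.
Qed.
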